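(* In the D-RR setting under the strongly convex assumptions, fix an epoch $t$ and suppose $\alpha_t\le \frac{1}{2L}$. Then for every $\ell\in\{0,\dots,m-1\}$, $$\mathbb{E}\|\bar x_t^{\ell+1}-\bar x_*^{\ell+1}\|^2\le\Big(1-\frac{\alpha_t\mu}{2}\Big)\mathbb{E}\|\bar x_t^{\ell}-\bar x_*^{\ell}\|^2+2\alpha_t\sigma^2_{\mathrm{shuffle}}+\frac{2\alpha_tL^2}{n}\Big(\frac1\mu+\alpha_t\Big)\mathbb{E}\|\mathbf{x}_t^\ell-\mathbf{1}(\bar x_t^\ell)^\intercal\|^2 .$$
   Context: D-RR setting. Let $n,m,p\ge1$ be integers and $[k]=\{1,\dots,k\}$. For $i\in[n]$, $\ell\in[m]$ let $f_{i,\ell}:\mathbb{R}^p\to\mathbb{R}$ be differentiable; $f_i:=\frac1m\sum_{\ell=1}^m f_{i,\ell}$, $f:=\frac1n\sum_{i=1}^n f_i$. Let $W=(w_{ij})\in\mathbb{R}^{n\times n}$ be nonnegative, symmetric, with $W\mathbf 1=\mathbf 1$ ($\mathbf 1$ the all-ones vector), compliant with an undirected connected graph on $[n]$ (for $i\ne j$, $w_{ij}>0$ iff $\{i,j\}$ is an edge); $\rho_w$ denotes the spectral norm of $W-\frac1n\mathbf 1\mathbf 1^\intercal$ (so $\rho_w<1$). The D-RR algorithm: given deterministic initial points $x_{i,0}\in\mathbb{R}^p$ and stepsizes $\alpha_t>0$, at each epoch $t=0,1,2,\dots$ each agent $i$ draws a permutation $(\pi^i_0,\dots,\pi^i_{m-1})$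 of $[m]$ uniformly at random, independently across agents and epochs; sets $x^0_{i,t}=x_{i,t}$; for $\ell=0,\dots,m-1$ sets $x^{\ell+1}_{i,t}=\sum_{j=1}^n w_{ij}\big(x^\ell_{j,t}-\alpha_t\nabla f_{j,\pi^j_\ell}(x^\ell_{j,t})\big)$; and sets $x_{i,t+1}=x^m_{i,t}$. Notation: $\mathbf{x}_t^\ell\in\mathbb{R}^{n\times p}$ has $i$-th row $(x^\ell_{i,t})^\intercal$; $\bar x_t^\ell=\frac1n\sum_i x^\ell_{i,t}$; $\mathbf 1(\bar x_t^\ell)^\intercal$ is the $n\times p$ matrix all of whose rows equal $(\bar x_t^\ell)^\intercal$; $\|\cdot\|$ is the Euclidean norm for vectors and the Frobenius norm for matrices; $\mathbb{E}$ is expectation over all random permutations. Strongly convex assumptions: each $f_{i,\ell}$ is $\mu$-strongly convex and has $L$-Lipschitz gradient ($0<\mu\le L$); $x^*$ is the unique minimizer of $f$. For epoch $t$ (with the permutations of that epoch) define $\bar x_*^\ell:=x^*-\alpha_t\sum_{k=0}^{\ell-1}\frac1n\sum_{i=1}^n\nabla f_{i,\pi^i_k}(x^* )$ for $\ell=0,\dots,m$ (so $\bar x_*^0=\bar x_*^m=x^*$), $\bar s_\ell:=\frac1n\sum_{i=1}^n f_{i,\pi^i_\ell}$, and the shuffling variance $\sigma^2_{\mathrm{shuffle}}:=\max_{\ell=0,\dots,m-1}\mathbb{E}\big[\bar s_\ell(\bar x_*^\ell)-\bar s_\ell(x^* )-\langle\nabla\bar s_\ell(x^* ),\bar x_*^\ell-x^*\rangle\big]$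 (which depends on $\alpha_t$). *)

(* Defs.v *)
From HB Require Import structures.
From mathcomp Require Import all_boot all_order all_algebra all_fingroup.
From mathcomp Require Import all_classical all_reals all_analysis.
Set Implicit Arguments. Unset Strict Implicit. Unset Printing Implicit Defensive.
Import Order.TTheory GRing.Theory Num.Theory.
Import numFieldNormedType.Exports.
Local Open Scope ring_scope.

Section DRR.
Variables (R : realType) (n m p : nat).
Local Notation vec := 'rV[R]_p.

Definition dotv (u v : vec) : R := \sum_(k < p) u 0 k * v 0 k.
Definition enorm (v : vec) : R := Num.sqrt (dotv v v).
Definition fnorm (M : 'M[R]_(n, p)) : R :=
  Num.sqrt (\sum_(i < n) \sum_(k < p) M i k ^+ 2).

Definition xbar (X : 'M[R]_(n, p)) : vec := (n%:R)^-1 *: \sum_(i < n) row i X.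
Definition consensus_err (X : 'M[R]_(n, p)) : 'M[R]_(n, p) :=
  \matrix_(i, k) (X i k - xbar X 0 k).

Definition strongly_convex (mu : R) (f : vec -> R) : Prop :=
  forall (x y : vec) (lam : R), 0 <= lam <= 1 ->
    f (lam *: x + (1 - lam) *: y) <=
      lam * f x + (1 - lam) * f y - mu / 2 * lam * (1 - lam) * enorm (x - y) ^+ 2.

Definition is_gradient (f : vec -> R) (g : vec -> vec) : Prop :=
  forall x : vec, differentiable f x /\ forall v : vec, 'd f x v = dotv (g x) v.

Definition lipschitz_grad (L : R) (g : vec -> vec) : Prop :=
  forall x y : vec, enorm (g x - g y) <= L * enorm (x - y).

(* W compliant with an undirected connected graph on the agents *)
Definition comm_edge (W : 'M[R]_n) : rel 'I_n := fun i j => (i != j) && (0 < W i j).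
Definition mixing_matrix (W : 'M[R]_n) : Prop :=
  [/\ forall i j, 0 <= W i j,
      W^T = W,
      forall i, \sum_(j < n) W i j = 1
    & forall i j, connect (comm_edge W) i j].

(* permutation profile of one epoch: one permutation of the m samples per agent *)
Definition profile := {ffun 'I_n -> {perm 'I_m}}.

Variables (G : 'I_n -> 'I_m -> vec -> vec) (F : 'I_n -> 'I_m -> vec -> R)
          (W : 'M[R]_n).

Definition inner_step (a : R) (pi : profile) (l : 'I_m) (X : 'M[R]_(n, p)) :=
  W *m \matrix_(j, k) (X j k - a * G j (pi j l) (row j X) 0 k).

Definition inner_iter (a : R) (pi : profile) (X : 'M[R]_(n, p)) (l : nat) :=
  iteri l (fun k Y => oapp (fun o : 'I_m => inner_step a pi o Y) Y (insub k)) X.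

(* probability space for epochs 0..t : all permutation profiles, uniformly *)
Definition Omega (t : nat) := {ffun 'I_t.+1 -> profile}.
Definition Exp (t : nat) (Y : Omega t -> R) : R :=
  (#|{: Omega t}|%:R)^-1 * \sum_(w : Omega t) Y w.

(* x_s (start of epoch s), for s <= t, given all permutations w *)
Definition outer_iter (alpha : nat -> R) (X0 : 'M[R]_(n, p)) (t : nat)
    (w : Omega t) (s : nat) :=
  iteri s (fun k Y => oapp (fun o : 'I_t.+1 => inner_iter (alpha k) (w o) Y m) Y
                           (insub k)) X0.

Definition x_tl (alpha : nat -> R) (X0 : 'M[R]_(n, p)) (t : nat) (w : Omega t)
    (l : nat) := inner_iter (alpha t) (w ord_max) (outer_iter alpha X0 w t) l.

Definition xstar_bar (a : R) (xs : vec) (pi : profile) (l : nat) : vec :=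
  xs - a *: \sum_(k < m | (k < l)%N) ((n%:R)^-1 *: \sum_(i < n) G i (pi i k) xs).

Definition sbar (pi : profile) (l : 'I_m) (x : vec) : R :=
  (n%:R)^-1 * \sum_(i < n) F i (pi i l) x.
Definition grad_sbar (pi : profile) (l : 'I_m) (x : vec) : vec :=
  (n%:R)^-1 *: \sum_(i < n) G i (pi i l) x.

Definition shuffle_breg (a : R) (xs : vec) (pi : profile) (l : 'I_m) : R :=
  sbar pi l (xstar_bar a xs pi l) - sbar pi l xs
  - dotv (grad_sbar pi l xs) (xstar_bar a xs pi l - xs).

(* sigma^2_shuffle for epoch t (stepsize a = alpha_t), expectation over all
   permutations of epochs 0..t; the max over the nonempty index set of
   nonnegative quantities is taken with 0 as neutral element *)
Definition sigma2_shuffle (a : R) (xs : vec) (t : nat) : R :=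
  \big[Num.max/0]_(l < m) Exp (fun w : Omega t => shuffle_breg a xs (w ord_max) l).

End DRR.

(* Main.v *)
Require Import Defs.
From HB Require Import structures.
From mathcomp Require Import all_boot all_order all_algebra all_fingroup.
From mathcomp Require Import all_classical all_reals all_analysis.
From mathcomp Require Import ring lra.
Set Implicit Arguments. Unset Strict Implicit. Unset Printing Implicit Defensive.
Import Order.TTheory GRing.Theory Num.Theory.
Import numFieldNormedType.Exports.
Local Open Scope ring_scope.

Section Dot.
Variables (R : realType) (p : nat).
Implicit Types u v w : 'rV[R]_p.

Lemma dotvC u v : dotv u v = dotv v u.
Proof. by apply: eq_bigr => k _; rewrite mulrC. Qed.
Lemma dotvDl u v w : dotv (u + v) w = dotv u w + dotv v w.
Proof. by rewrite /dotv -big_split; apply: eq_bigr => k _; rewrite !mxE mulrDl. Qed.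
Lemma dotvZl a u v : dotv (a *: u) v = a * dotv u v.
Proof. by rewrite /dotv mulr_sumr; apply: eq_bigr => k _; rewrite !mxE mulrA. Qed.
Lemma dotvNl u v : dotv (- u) v = - dotv u v.
Proof. by rewrite -scaleN1r dotvZl mulN1r. Qed.
Lemma dotvBl u v w : dotv (u - v) w = dotv u w - dotv v w.
Proof. by rewrite dotvDl dotvNl. Qed.
Lemma dotvDr u v w : dotv w (u + v) = dotv w u + dotv w v.
Proof. by rewrite dotvC dotvDl !(dotvC w). Qed.
Lemma dotvZr a u v : dotv v (a *: u) = a * dotv v u.
Proof. by rewrite dotvC dotvZl dotvC. Qed.
Lemma dotvNr u v : dotv v (- u) = - dotv v u.
Proof. by rewrite dotvC dotvNl dotvC. Qed.
Lemma dotvBr u v w : dotv w (u - v) = dotv w u - dotv w v.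
Proof. by rewrite dotvDr dotvNr. Qed.
Lemma dotv_suml (I : finType) (P : pred I) (f : I -> 'rV[R]_p) v :
  dotv (\sum_(i | P i) f i) v = \sum_(i | P i) dotv (f i) v.
Proof.
rewrite /dotv exchange_big /=; apply: eq_bigr => k _.
by rewrite summxE mulr_suml.
Qed.
Lemma dotv0l v : dotv 0 v = 0.
Proof. by rewrite /dotv big1 // => k _; rewrite mxE mul0r. Qed.
Lemma dotv_ge0 v : 0 <= dotv v v.
Proof. by apply: sumr_ge0 => k _; rewrite -expr2 sqr_ge0. Qed.
Lemma enorm_sq v : enorm v ^+ 2 = dotv v v.
Proof. by rewrite /enorm sqr_sqrtr // dotv_ge0. Qed.
Lemma enorm_ge0 v : 0 <= enorm v.
Proof. exact: sqrtr_ge0. Qed.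

Lemma young u v c : 0 < c -> 2 * dotv u v <= c * dotv u u + c^-1 * dotv v v.
Proof.
move=> c0.
have := dotv_ge0 (c *: u - v).
rewrite !(dotvBl, dotvBr, dotvZl, dotvZr) (dotvC v u) => H.
have -> : c * dotv u u + c^-1 * dotv v v =
   c^-1 * (c * (c * dotv u u) - c * dotv u v - (c * dotv u v - dotv v v))
    + 2 * dotv u v.
  by field; rewrite gt_eqF.
rewrite lerDr; apply: mulr_ge0 => //; rewrite invr_ge0 ltW //.
Qed.

Lemma cs_sq u v : dotv u v ^+ 2 <= dotv u u * dotv v v.
Proof.
have Hq t : 0 <= dotv u u - 2 * t * dotv u v + t ^+ 2 * dotv v v.
  have := dotv_ge0 (u - t *: v).
  rewrite !(dotvBl, dotvBr, dotvZl, dotvZr) (dotvC v u).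
  by move=> H; apply: le_trans H _; rewrite le_eqVlt; apply/orP; left; apply/eqP; ring.
have [v0|vpos] := eqVneq (dotv v v) 0.
  have B0 : dotv u v = 0.
    apply/eqP; apply/negPn/negP => B.
    have := Hq ((dotv u u + 1) / (2 * dotv u v)).
    rewrite v0 mulr0 addr0.
    have -> : 2 * ((dotv u u + 1) / (2 * dotv u v)) * dotv u v = dotv u u + 1.
      by field.
    by lra.
  by rewrite B0 v0 mulr0 expr0n.
have vp : 0 < dotv v v by rewrite lt0r vpos dotv_ge0.
have := Hq (dotv u v / dotv v v).
have -> : dotv u u - 2 * (dotv u v / dotv v v) * dotv u v +
    (dotv u v / dotv v v) ^+ 2 * dotv v v
  = (dotv u u * dotv v v - dotv u v ^+ 2) / dotv v v by field.
rewrite pmulr_lge0 ?invr_gt0 // subr_ge0 //.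
Qed.

Lemma cs_bound u v K : 0 <= K -> dotv u u <= K ^+ 2 * dotv v v ->
  dotv u v <= K * dotv v v.
Proof.
move=> K0 H.
have := cs_sq u v.
have h1 : dotv u u * dotv v v <= (K * dotv v v) ^+ 2.
  by rewrite exprMn expr2 mulrA ler_wpM2r // dotv_ge0.
have h2 : 0 <= K * dotv v v by rewrite mulr_ge0 // dotv_ge0.
move=> H2; have := le_trans H2 h1.
by move=> H3; nra.
Qed.

Lemma jensen n (w : 'I_n -> 'rV[R]_p) : (0 < n)%N ->
  dotv ((n%:R)^-1 *: \sum_i w i) ((n%:R)^-1 *: \sum_i w i)
  <= (n%:R)^-1 * \sum_i dotv (w i) (w i).
Proof.
move=> n0; set wb := (n%:R)^-1 *: \sum_i w i.
have nR : 0 < n%:R :> R by rewrite ltr0n.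
have H : 0 <= \sum_i dotv (w i - wb) (w i - wb) by apply: sumr_ge0 => i _; exact: dotv_ge0.
have E : \sum_i dotv (w i - wb) (w i - wb) =
   \sum_i dotv (w i) (w i) - n%:R * dotv wb wb.
  under eq_bigr => i _ do rewrite !(dotvBl, dotvBr) (dotvC wb (w i)).
  rewrite !big_split /= !sumrN -dotv_suml.
  have Sw : \sum_i w i = n%:R *: wb by rewrite /wb scalerA mulfV ?gt_eqF // scale1r.
  rewrite sumrB -dotv_suml Sw dotvZl sumr_const card_ord -mulr_natl.
  ring.
rewrite E subr_ge0 in H.
rewrite -(ler_pM2l nR) mulrA mulfV ?gt_eqF // mul1r //.
Qed.

Lemma dot_exp e u v a : dotv (e - a *: (u + v)) (e - a *: (u + v)) =
   dotv e e - 2 * a * dotv e v - 2 * a * dotv e u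
   + a ^+ 2 * (dotv u u + 2 * dotv u v + dotv v v).
Proof.
rewrite !(dotvBl, dotvBr, dotvDl, dotvDr, dotvZl, dotvZr).
rewrite (dotvC u e) (dotvC v e) (dotvC v u); ring.
Qed.
End Dot.

Section SC.
Local Open Scope classical_set_scope.
Variables (R : realType) (p : nat).

Lemma sc_first (f : 'rV[R]_p -> R) (g : 'rV[R]_p -> 'rV[R]_p) mu :
  0 <= mu -> is_gradient f g -> strongly_convex mu f ->
  forall x y, f x + dotv (g x) (y - x) + mu / 2 * dotv (y - x) (y - x) <= f y.
Proof.
move=> mu0 hg hsc x y.
set d := y - x.
have [dif dg] := hg x.
set c := f y - f x - mu / 2 * dotv d d.
suff : 'd f x d <= c by rewrite dg /c; lra.
set q := fun h : R => h^-1 *: ((f \o shift x) (h *: d) - f x).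
have hder : q @ 0^' --> 'D_d f x.
  by have := @diff_derivable _ _ _ f x d dif.
rewrite -deriveE //.
have hr := cvg_dnbhs_at_right hder.
apply/ler_addgt0Pr => e e0.
set K := mu / 2 * dotv d d.
have K0 : 0 <= K by apply: mulr_ge0; [apply: divr_ge0 | apply: dotv_ge0].
apply: (cvgr_to_le hr).
near=> h.
have h0 : 0 < h by near: h; exact: nbhs_right_gt.
have h1 : h < 1 by near: h; apply: nbhs_right_lt.
have he : h < e / (K + 1) by near: h; apply: nbhs_right_lt; rewrite divr_gt0 // ltr_wpDl.
have hh : 0 <= h <= 1 by rewrite !ltW.
have := hsc y x h hh.
have -> : h *: y + (1 - h) *: x = h *: d + x.
  by rewrite /d scalerBr scalerBl scale1r addrA addrAC.
rewrite enorm_sq -/d => H.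
rewrite /q /= /shift.
have hK : h * K <= e.
  have : h * (K + 1) < e by rewrite -ltr_pdivlMr // ltr_wpDl.
  by nra.
rewrite -ler_pdivlMl // ?invr_gt0 // invrK.
rewrite /c -/K.
have : h * K = mu / 2 * h * dotv d d by rewrite /K; ring.
move=> hK'; nra.
Unshelve. all: by end_near.
Qed.

Lemma convex_lb (f : 'rV[R]_p -> R) (g : 'rV[R]_p -> 'rV[R]_p) mu :
  0 <= mu -> is_gradient f g -> strongly_convex mu f ->
  forall x y, f x + dotv (g x) (y - x) <= f y.
Proof.
move=> mu0 hg hsc x y; apply: le_trans (sc_first mu0 hg hsc x y).
by rewrite lerDl mulr_ge0 ?divr_ge0 ?dotv_ge0.
Qed.

Lemma lip_sq (g : 'rV[R]_p -> 'rV[R]_p) L : lipschitz_grad L g ->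
  forall x y, dotv (g x - g y) (g x - g y) <= L ^+ 2 * dotv (x - y) (x - y).
Proof.
move=> hL x y; rewrite -!enorm_sq -exprMn.
have h := hL x y; have h0 := enorm_ge0 (g x - g y); nra.
Qed.

Lemma descent (f : 'rV[R]_p -> R) (g : 'rV[R]_p -> 'rV[R]_p) mu L :
  0 <= mu -> 0 <= L -> is_gradient f g -> strongly_convex mu f -> lipschitz_grad L g ->
  forall x y, f y <= f x + dotv (g x) (y - x) + L / 2 * dotv (y - x) (y - x).
Proof.
move=> mu0 L0 hg hsc hL x y.
set d := y - x.
have key (N : nat) : (0 < N)%N ->
    f y - f x - dotv (g x) d - L / 2 * dotv d d <= L * dotv d d / (2 * N%:R).
  move=> N0.
  have NR : 0 < N%:R :> R by rewrite ltr0n.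
  set s := (N%:R)^-1 *: d.
  pose z (k : nat) := x + k%:R *: s.
  have step (k : nat) : f (z k) - f x <=
      k%:R * dotv (g x) s + L * dotv s s * (k%:R * (k%:R + 1) / 2).
    elim: k => [|k IH].
      by rewrite /z /= scale0r addr0 subrr !(mul0r, add0r, mulr0).
    have hc := convex_lb mu0 hg hsc (z k.+1) (z k).
    have zd : z k - z k.+1 = - s.
      by rewrite /z -natr1 scalerDl scale1r [x + (_ + _)]addrA opprD addrA subrr add0r.
    rewrite zd dotvNr in hc.
    have zx : z k.+1 - x = (k.+1)%:R *: s by rewrite /z addrC addKr.
    have hb : dotv (g (z k.+1) - g x) s <= (L * (k.+1)%:R) * dotv s s.
      apply: cs_bound; first by rewrite mulr_ge0.
      apply: le_trans (lip_sq hL _ _) _.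
      by rewrite zx dotvZl dotvZr le_eqVlt; apply/orP; left; apply/eqP; ring.
    rewrite dotvBl in hb.
    rewrite -natr1.
    nra.
  have := step N.
  have -> : z N = y.
    by rewrite /z /s scalerA mulfV ?gt_eqF // scale1r /d addrC subrK.
  rewrite /s dotvZr !dotvZl dotvZr mulrA mulfV ?gt_eqF // mul1r => H.
  have E : L * ((N%:R)^-1 * ((N%:R)^-1 * dotv d d)) * (N%:R * (N%:R + 1) / 2)
     = L / 2 * dotv d d + L * dotv d d / (2 * N%:R) by field; rewrite gt_eqF.
  by rewrite E in H; lra.
set A := f y - f x - dotv (g x) d - L / 2 * dotv d d in key.
set B := L * dotv d d / 2.
have B0 : 0 <= B by rewrite /B divr_ge0 // mulr_ge0 // dotv_ge0.
suff : A <= 0 by rewrite /A; lra.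
rewrite leNgt; apply/negP => A0.
have := archi_boundP (divr_ge0 B0 (ltW A0)).
set N := Num.bound _ => hN.
have N0 : (0 < N)%N.
  by rewrite -(ltr0n R); apply: le_lt_trans hN; rewrite divr_ge0 // ltW.
have := key N N0.
have NR : 0 < N%:R :> R by rewrite ltr0n.
have -> : L * dotv d d / (2 * N%:R) = B / N%:R by rewrite /B; field; rewrite gt_eqF.
rewrite ler_pdivlMr // => H.
rewrite ltr_pdivrMr // in hN; nra.
Qed.

Lemma cocoercive (f : 'rV[R]_p -> R) (g : 'rV[R]_p -> 'rV[R]_p) mu L :
  0 <= mu -> 0 < L -> is_gradient f g -> strongly_convex mu f -> lipschitz_grad L g ->
  forall x y, dotv (g y - g x) (g y - g x) <= 2 * L * (f y - f x - dotv (g x) (y - x)).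
Proof.
move=> mu0 L0 hg hsc hL x y.
set w := g y - g x.
set z := y - L^-1 *: w.
have h1 := descent mu0 (ltW L0) hg hsc hL y z.
have h2 := convex_lb mu0 hg hsc x z.
have zy : z - y = - (L^-1 *: w) by rewrite /z addrAC subrr add0r.
have zx : z - x = (y - x) - L^-1 *: w by rewrite /z addrAC.
rewrite zy zx in h1 h2.
have E1 : dotv (g y) (-(L^-1 *: w)) = - (L^-1 * dotv (g y) w) by rewrite dotvNr dotvZr.
have E2 : dotv (-(L^-1 *: w)) (-(L^-1 *: w)) = L^-1 * L^-1 * dotv w w.
  by rewrite dotvNl dotvNr opprK dotvZl dotvZr mulrA.
have E3 : dotv (g x) (y - x - L^-1 *: w) = dotv (g x) (y - x) - L^-1 * dotv (g x) w.
  by rewrite (dotvBr (y - x)) dotvZr.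
rewrite E1 E2 in h1; rewrite E3 in h2.
have ew : dotv (g y) w - dotv (g x) w = dotv w w by rewrite -dotvBl.
set D := f y - f x - dotv (g x) (y - x).
have : L^-1 * (dotv w w) / 2 <= D.
  have E : L / 2 * (L^-1 * L^-1 * dotv w w) = L^-1 * dotv w w / 2 by field; rewrite gt_eqF.
  rewrite E in h1.
  have E4 : L^-1 * dotv w w = L^-1 * dotv (g y) w - L^-1 * dotv (g x) w.
    by rewrite -ew mulrBr.
  rewrite /D; lra.
rewrite -(ler_pM2l (_ : 0 < 2 * L)); last by rewrite mulr_gt0.
have -> : 2 * L * (L^-1 * dotv w w / 2) = dotv w w by field; rewrite gt_eqF.
done.
Qed.
End SC.

Section Main.
Variables (R : realType) (n m p : nat).
Variables (G : 'I_n -> 'I_m -> 'rV[R]_p -> 'rV[R]_p) (F : 'I_n -> 'I_m -> 'rV[R]_p -> R)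
  (W : 'M[R]_n).
Hypothesis n0 : (0 < n)%N.

Lemma nR : 0 < n%:R :> R. Proof. by rewrite ltr0n. Qed.

Lemma xbar_W (M : 'M[R]_(n, p)) : mixing_matrix W -> xbar (W *m M) = xbar M.
Proof.
case=> _ WT Wr _; rewrite /xbar; congr (_ *: _).
under eq_bigr => i _ do rewrite row_mul mulmx_sum_row.
rewrite exchange_big /=; apply: eq_bigr => j _.
rewrite -scaler_suml.
have -> : \sum_i row i W 0 j = 1.
  rewrite -(Wr j); apply: eq_bigr => i _.
  by rewrite mxE -{1}WT mxE.
by rewrite scale1r.
Qed.

Lemma xbar_step a (pi : profile n m) (l : 'I_m) (X : 'M[R]_(n, p)) :
  xbar (\matrix_(j, k) (X j k - a * G j (pi j l) (row j X) 0 k)) =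
  xbar X - a *: ((n%:R)^-1 *: \sum_j G j (pi j l) (row j X)).
Proof.
rewrite /xbar.
have -> : \sum_i row i (\matrix_(j, k) (X j k - a * G j (pi j l) (row j X) 0 k)) =
   \sum_i row i X - a *: \sum_j G j (pi j l) (row j X).
  rewrite scaler_sumr -sumrB; apply: eq_bigr => i _.
  by apply/rowP => k; rewrite !mxE.
by rewrite scalerBr !scalerA mulrC.
Qed.

Lemma xstar_succ a xs (pi : profile n m) (l : 'I_m) :
  xstar_bar G a xs pi l.+1 = xstar_bar G a xs pi l - a *: grad_sbar G pi l xs.
Proof.
rewrite /xstar_bar /grad_sbar (bigD1 l) /=; last by rewrite ltnS.
have -> : \sum_(i < m | (i < l.+1)%N && (i != l)) (n%:R^-1 *: \sum_(i0 < n) G i0 (pi i0 i) xs)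
   = \sum_(k < m | (k < l)%N) (n%:R^-1 *: \sum_(i < n) G i (pi i k) xs).
  apply: eq_bigl => k; rewrite ltnS [(k <= l)%N]leq_eqVlt.
  case: (eqVneq k l) => [->|kl]; rewrite ?andbF ?ltnn ?andbT //.
  by apply: orb_idl => /eqP E; move: kl; rewrite -(inj_eq val_inj) /= E eqxx.
by rewrite scalerDr opprD addrA addrAC.
Qed.

Lemma fnorm_sq (X : 'M[R]_(n, p)) :
  fnorm (consensus_err X) ^+ 2 =
  \sum_i dotv (row i X - xbar X) (row i X - xbar X).
Proof.
rewrite /fnorm sqr_sqrtr; last by apply: sumr_ge0 => i _; apply: sumr_ge0 => k _; exact: sqr_ge0.
apply: eq_bigr => i _; apply: eq_bigr => k _.
by rewrite !mxE expr2.
Qed.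


Lemma pointwise (X : 'M[R]_(n, p)) (pi : profile n m) (l : 'I_m) a mu L xs :
  mixing_matrix W -> (forall i l, is_gradient (F i l) (G i l)) ->
  0 < mu -> mu <= L ->
  (forall i l, strongly_convex mu (F i l)) ->
  (forall i l, lipschitz_grad L (G i l)) ->
  0 < a -> a <= (2 * L)^-1 ->
  enorm (xbar (inner_step G W a pi l X) - xstar_bar G a xs pi l.+1) ^+ 2 <=
  (1 - a * mu / 2) * enorm (xbar X - xstar_bar G a xs pi l) ^+ 2
  + 2 * a * shuffle_breg G F a xs pi l
  + 2 * a * L ^+ 2 / n%:R * (mu^-1 + a) * fnorm (consensus_err X) ^+ 2.
Proof.
move=> hW hg mu0 muL hsc hL a0 aL.
have L0 : 0 < L by apply: lt_le_trans muL.
have mu0' : 0 <= mu by apply: ltW.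
have NR := nR.
set xb := xbar X; set c := xstar_bar G a xs pi l.
pose g i := G i (pi i l); pose f i := F i (pi i l).
set e := xb - c.
set u := (n%:R)^-1 *: \sum_i (g i (row i X) - g i xb).
set v := (n%:R)^-1 *: \sum_i (g i xb - g i xs).
have Hvec : xbar (inner_step G W a pi l X) - xstar_bar G a xs pi l.+1 = e - a *: (u + v).
  rewrite /inner_step xbar_W // xbar_step xstar_succ /grad_sbar.
  have -> : u + v = (n%:R)^-1 *: \sum_i g i (row i X) - (n%:R)^-1 *: \sum_i g i xs.
    rewrite /u /v -scalerDr -big_split /= -scalerBr -sumrB; congr (_ *: _).
    by apply: eq_bigr => i _; rewrite addrA subrK.
  by apply/rowP => k; rewrite !mxE; ring.
rewrite Hvec !enorm_sq -/xb -/c -/e.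
set E := dotv e e.
set D := fun i y x => f i y - f i x - dotv (g i x) (y - x).
rewrite dot_exp -/E.

have hsc_i i y x : mu / 2 * dotv (y - x) (y - x) <= D i y x.
  have := sc_first mu0' (hg i (pi i l)) (hsc i (pi i l)) x y.
  by rewrite /D /f /g; lra.
have hco_i i y x : dotv (g i y - g i x) (g i y - g i x) <= 2 * L * D i y x.
  exact: (cocoercive mu0' L0 (hg i (pi i l)) (hsc i (pi i l)) (hL i (pi i l))).
have three_i i : dotv (g i xb - g i xs) e = D i c xb + D i xb xs - D i c xs.
  rewrite /D /e !(dotvBl, dotvBr); ring.
set S1 := (n%:R)^-1 * \sum_i D i c xb.
set S2 := (n%:R)^-1 * \sum_i D i xb xs.
set Dsh := shuffle_breg G F a xs pi l.
have hDsh : Dsh = (n%:R)^-1 * \sum_i D i c xs.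
  rewrite /Dsh /shuffle_breg /sbar /grad_sbar dotvZl dotv_suml -/c.
  rewrite -!mulrBr -!sumrB; congr (_ * _); apply: eq_bigr => i _.
have hT : dotv e v = S1 + S2 - Dsh.
  rewrite dotvC /v dotvZl dotv_suml.
  under eq_bigr => i _ do rewrite three_i.
  by rewrite hDsh /S1 /S2 -mulrDr -mulrBr -big_split -sumrB.
have hS1 : mu / 2 * E <= S1.
  have Hs : \sum_(i < n) (mu / 2 * E) <= \sum_i D i c xb.
    apply: ler_sum => i _.
    have := hsc_i i c xb.
    have -> : dotv (c - xb) (c - xb) = E.
      by rewrite /E /e -opprB dotvNl dotvNr opprK.
    done.
  rewrite sumr_const card_ord -mulr_natl in Hs.
  rewrite /S1 -(ler_pM2l NR) [X in _ <= X]mulrA mulfV ?gt_eqF // mul1r; lra.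
have hV : dotv v v <= 2 * L * S2.
  apply: le_trans (jensen (fun i => g i xb - g i xs) n0) _.
  rewrite /S2 mulrCA; apply: ler_wpM2l; first by rewrite invr_ge0 ltW.
  rewrite mulr_sumr; apply: ler_sum => i _; apply: hco_i.
have hU : dotv u u <= L ^+ 2 / n%:R * fnorm (consensus_err X) ^+ 2.
  apply: le_trans (jensen (fun i => g i (row i X) - g i xb) n0) _.
  rewrite fnorm_sq -/xb.
  rewrite [X in _ <= X](_ : _ = n%:R^-1 * (L ^+ 2 * \sum_i dotv (row i X - xb) (row i X - xb))); last by rewrite mulrAC mulrC.
  apply: ler_wpM2l; first by rewrite invr_ge0 ltW.
  rewrite mulr_sumr; apply: ler_sum => i _; apply: lip_sq; apply: hL.
have Y1 := young (- e) u (_ : 0 < mu / 2).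
rewrite !dotvNl dotvNr opprK -/E in Y1.
have {Y1} Y1 := Y1 (divr_gt0 mu0 (ltr0n _ 2)).
have Y2 := young u v ltr01; rewrite invr1 !mul1r in Y2.
have V0 : 0 <= dotv v v := dotv_ge0 v.
have S20 : 0 <= S2 by nra.
have aL' : 2 * a * L <= 1.
  have h := aL; rewrite -[(2 * L)^-1]mul1r ler_pdivlMr ?mulr_gt0 // in h; nra.
rewrite hT.
set C := fnorm (consensus_err X) ^+ 2 in hU *.
set U := dotv u u in Y1 Y2 hU *.
have C0 : 0 <= C by rewrite /C sqr_ge0.
have Emu : (mu / 2)^-1 = 2 * mu^-1 by rewrite invfM invrK mulrC.
rewrite Emu in Y1.
have p1 : a * (- (2 * dotv e u)) <= a * (mu / 2 * E + 2 * mu^-1 * U) by apply: ler_wpM2l; [exact: ltW | lra].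
have p2 : a ^+ 2 * (2 * dotv u v) <= a ^+ 2 * (U + dotv v v) by apply: ler_wpM2l; [exact: sqr_ge0 | exact: Y2].
have p3 : a * (mu / 2 * E) <= a * S1 by apply: ler_wpM2l; [exact: ltW | exact: hS1].
have p4 : a ^+ 2 * dotv v v <= a ^+ 2 * (2 * L * S2) by apply: ler_wpM2l; [exact: sqr_ge0 | exact: hV].
have p4' : a * S2 * (2 * a * L) <= a * S2.
  by rewrite -[X in _ <= X]mulr1; apply: ler_wpM2l => //; apply: mulr_ge0 => //; exact: ltW.
have p5 : (2 * a * mu^-1 + 2 * a ^+ 2) * U <= (2 * a * mu^-1 + 2 * a ^+ 2) * (L ^+ 2 / n%:R * C).
  apply: ler_wpM2l => //.
  have mi : 0 < mu^-1 by rewrite invr_gt0.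
  have := sqr_ge0 a; nra.
have Eg : 2 * a * L ^+ 2 / n%:R * (mu^-1 + a) * C = (2 * a * mu^-1 + 2 * a ^+ 2) * (L ^+ 2 / n%:R * C) by ring.
rewrite Eg; lra.
Qed.



Lemma Exp_le t (Y A B C : Omega n m t -> R) c1 c2 c3 :
  (forall w, Y w <= c1 * A w + c2 * B w + c3 * C w) ->
  Exp Y <= c1 * Exp A + c2 * Exp B + c3 * Exp C.
Proof.
move=> H; rewrite /Exp.
have -> : c1 * ((#|{: Omega n m t}|%:R)^-1 * \sum_w A w) +
    c2 * ((#|{: Omega n m t}|%:R)^-1 * \sum_w B w) +
    c3 * ((#|{: Omega n m t}|%:R)^-1 * \sum_w C w) =
    (#|{: Omega n m t}|%:R)^-1 * \sum_w (c1 * A w + c2 * B w + c3 * C w).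
  by rewrite !big_split /= -!mulr_sumr; ring.
apply: ler_wpM2l; first by rewrite invr_ge0 ler0n.
by apply: ler_sum => w _; apply: H.
Qed.

End Main.

Unset Implicit Arguments.

Theorem lemma5 (R : realType) (n m p : nat)
  (F : 'I_n -> 'I_m -> 'rV[R]_p -> R) (G : 'I_n -> 'I_m -> 'rV[R]_p -> 'rV[R]_p)
  (W : 'M[R]_n) (mu L : R) (xs : 'rV[R]_p) (X0 : 'M[R]_(n, p))
  (alpha : nat -> R) (t : nat) :
  (0 < n)%N -> (0 < m)%N -> (0 < p)%N ->
  mixing_matrix W ->
  (forall i l, is_gradient (F i l) (G i l)) ->
  0 < mu -> mu <= L ->
  (forall i l, strongly_convex mu (F i l)) ->
  (forall i l, lipschitz_grad L (G i l)) ->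
  (forall x, (n%:R)^-1 * \sum_(i < n) ((m%:R)^-1 * \sum_(l < m) F i l x)
             >= (n%:R)^-1 * \sum_(i < n) ((m%:R)^-1 * \sum_(l < m) F i l xs)) ->
  (forall s, 0 < alpha s) ->
  alpha t <= (2 * L)^-1 ->
  forall l : 'I_m,
    Exp (fun w : Omega n m t =>
      enorm (xbar (x_tl G W alpha X0 w l.+1)
             - xstar_bar G (alpha t) xs (w ord_max) l.+1) ^+ 2)
    <= (1 - alpha t * mu / 2) *
         Exp (fun w : Omega n m t =>
           enorm (xbar (x_tl G W alpha X0 w l)
                  - xstar_bar G (alpha t) xs (w ord_max) l) ^+ 2)
       + 2 * alpha t * sigma2_shuffle G F (alpha t) xs t
       + 2 * alpha t * L ^+ 2 / n%:R * (mu^-1 + alpha t) *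
         Exp (fun w : Omega n m t => fnorm (consensus_err (x_tl G W alpha X0 w l)) ^+ 2).
Proof.
move=> n0 m0 p0 hW hg mu0 muL hsc hL _ ha haL l.
have step (w : Omega n m t) : x_tl G W alpha X0 w l.+1 =
    inner_step G W (alpha t) (w ord_max) l (x_tl G W alpha X0 w l).
  have E : insub (l : nat) = Some l :> option 'I_m by apply: valK.
  by rewrite /x_tl /inner_iter /= E.
have H := Exp_le (Y := fun w : Omega n m t =>
      enorm (xbar (x_tl G W alpha X0 w l.+1)
             - xstar_bar G (alpha t) xs (w ord_max) l.+1) ^+ 2)
   (A := fun w => enorm (xbar (x_tl G W alpha X0 w l)
                  - xstar_bar G (alpha t) xs (w ord_max) l) ^+ 2)
   (B := fun w => shuffle_breg G F (alpha t) xs (w ord_max) l)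
   (C := fun w => fnorm (consensus_err (x_tl G W alpha X0 w l)) ^+ 2)
   (c1 := 1 - alpha t * mu / 2) (c2 := 2 * alpha t) (c3 := 2 * alpha t * L ^+ 2 / n%:R * (mu^-1 + alpha t)).
apply: le_trans (H _) _.
  move=> w; rewrite step.
  exact: (pointwise n0 _ _ _ _ hW hg mu0 muL hsc hL (ha t) haL).
rewrite lerD2r lerD2l; apply: ler_wpM2l; first by rewrite mulr_ge0 // ltW.
rewrite /sigma2_shuffle.
exact: (le_bigmax _ (fun l0 : 'I_m => Exp (fun w : Omega n m t => shuffle_breg G F (alpha t) xs (w ord_max) l0)) l).
Qed.
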